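(* There is a finite magma satisfying $\mathrm{x}\simeq\mathrm{y}\diamond((\mathrm{y}\diamond(\mathrm{x}\diamond\mathrm{x}))\diamond\mathrm{y})$ but not $\mathrm{x}\simeq(\mathrm{x}\diamond\mathrm{x})\diamond((\mathrm{x}\diamond\mathrm{x})\diamond\mathrm{x})$. In particular, the first law does not imply the second, even for finite magmas.
   Context: A magma is a set with a binary operation $\diamond$; it satisfies a law if the identity holds for all assignments of the variables to elements of the magma. *)

(* Defs.v *)
From mathcomp Require Import all_boot.

Definition satisfies_law1 (T : Type) (op : T -> T -> T) : Prop :=
  forall x y : T, x = op y (op (op y (op x x)) y).

Definition satisfies_law2 (T : Type) (op : T -> T -> T) : Prop :=
  forall x : T, x = op (op x x) (op (op x x) x).

(* Main.v *)
Require Import Defs.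
From mathcomp Require Import all_boot.

Definition phiL : seq nat :=
  [:: 2;4;3;1;3; 1;1;1;2;0; 1;3;3;2;3; 2;0;2;0;0; 1;0;0;0;0].

Definition fop (X Y : nat) : nat :=
  let x1 := X %/ 5 in let x2 := X %% 5 in
  let y1 := Y %/ 5 in let y2 := Y %% 5 in
  ((3 * x1 + 4 * y1) %% 5) * 5 + (3 * x2 + 4 * y2 + nth 0 phiL (x1 * 5 + y1)) %% 5.

Lemma fop_lt X Y : fop X Y < 25.
Proof.
rewrite /fop.
have h1 := ltn_pmod (3 * (X %/ 5) + 4 * (Y %/ 5)) (isT : 0 < 5).
have h2 := ltn_pmod (3 * (X %% 5) + 4 * (Y %% 5) + nth 0 phiL (X %/ 5 * 5 + Y %/ 5)) (isT : 0 < 5).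
move: h1 h2; set a := _ %% 5; set b := _ %% 5 => h1 h2.
have : a * 5 <= 4 * 5 by rewrite leq_mul2r /=; rewrite -ltnS.
move=> h3.
by apply: (leq_trans (n := a * 5 + 5)); [rewrite ltn_add2l | rewrite -[25]/(4*5+5) leq_add2r].
Qed.

Definition mop (x y : 'I_25) : 'I_25 := Ordinal (fop_lt x y).

Definition law1n : bool :=
  all (fun x => all (fun y => x == fop y (fop (fop y (fop x x)) y)) (iota 0 25)) (iota 0 25).

Lemma law1n_ok : law1n.
Proof. by vm_compute. Qed.

Theorem mainTheorem4 :
  exists (T : finType) (op : T -> T -> T),
    satisfies_law1 T op /\ ~ satisfies_law2 T op.
Proof.
exists ('I_25 : finType), mop; split.
- move=> x y; apply: val_inj => /=.
  have /allP hx := law1n_ok.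
  have hxi : nat_of_ord x \in iota 0 25 by rewrite mem_iota /= (ltn_ord x).
  have /allP hy := hx x hxi.
  by apply/eqP; apply: hy; rewrite mem_iota /= (ltn_ord y).
- move=> H; have := H (Ordinal (isT : 5 < 25)).
  move=> /(congr1 (@nat_of_ord 25)).
  by vm_compute.
Qed.
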